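(* Let $c>1$. If a number $x_1\in(0,1)$ satisfies $x_1\operatorname{arctanh} x_1<\frac{1+c}{2c}$, then $\Phi(c)<H(x_1,c)$.
   Context: $\operatorname{arctanh} r=\frac12\log\frac{1+r}{1-r}$. For $c\ge0$, $\Phi(c)=\sup_{0<r<1}\{r+c(1-r^2)\operatorname{arctanh} r\}$. For $x>0$ and $c$ real, $H(x,c)=\frac{1-c}{2}x+\frac{1+c}{2}x^{-1}$. *)

(* Defs.v *)
From Stdlib Require Import Reals.
Open Scope R_scope.

Definition arctanh (r : R) : R := / 2 * ln ((1 + r) / (1 - r)).

Definition Phi_set (c : R) (y : R) : Prop :=
  exists r, 0 < r < 1 /\ y = r + c * (1 - r ^ 2) * arctanh r.

Definition is_Phi (c p : R) : Prop := is_lub (Phi_set c) p.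

Definition H (x c : R) : R := (1 - c) / 2 * x + (1 + c) / 2 * / x.

(* Main.v *)
Require Import Defs.
From Stdlib Require Import Reals Lra.
From Coquelicot Require Import Coquelicot.
Open Scope R_scope.

Definition ff c r := r + c * (1 - r ^ 2) * arctanh r.

Lemma deriv_ff c r : -1 < r < 1 -> is_derive (ff c) r (1 + c - 2*c*r*arctanh r).
Proof. intros Hr. unfold ff, arctanh. auto_derive.
- repeat split; try lra. apply Rmult_lt_0_compat; [lra|apply Rinv_0_lt_compat; lra].
- assert (1 - r <> 0) by lra. assert (1 + r <> 0) by lra.
  set (L := ln _). field. split; auto.
Qed.

Lemma atanh_mono t s : 0 <= t -> t <= s -> s < 1 -> 0 <= arctanh t <= arctanh s.
Proof.
  intros A1 A2 A3. unfold arctanh.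
  assert (Q1 : 1 <= (1 + t) / (1 - t)).
  { apply (Rmult_le_reg_r (1 - t)); [lra|]. unfold Rdiv. rewrite Rmult_assoc, Rinv_l; lra. }
  assert (Q2 : (1 + t) / (1 - t) <= (1 + s) / (1 - s)).
  { unfold Rdiv. apply (Rmult_le_reg_r ((1 - t)*(1-s))). nra.
    replace ((1 + t) * / (1 - t) * ((1 - t) * (1 - s))) with ((1+t)*(1-s)) by (field; lra).
    replace ((1 + s) * / (1 - s) * ((1 - t) * (1 - s))) with ((1+s)*(1-t)) by (field; lra).
    nra. }
  split.
  - rewrite <- ln_1 at 1 . assert (0 <= ln ((1 + t) / (1 - t)) - ln 1).
    { destruct Q1 as [Q1|Q1]. left. apply Rlt_Rminus, ln_increasing; lra. rewrite <- Q1; lra. }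
    rewrite ln_1 in *. lra.
  - apply Rmult_le_compat_l; [lra|]. apply ln_le; lra.
Qed.

Lemma prod_mono t s : 0 <= t -> t <= s -> s < 1 -> t * arctanh t <= s * arctanh s.
Proof. intros. destruct (atanh_mono t s) as [P1 P2]; try lra.
  assert (0 <= s * (arctanh s - arctanh t)) by (apply Rmult_le_pos; lra).
  assert (0 <= (s - t) * arctanh t) by (apply Rmult_le_pos; lra). nra. Qed.

Lemma tangent c t r : 1 < c -> 0 < t < 1 -> 0 < r < 1 ->
  ff c r - ff c t <= (1 + c - 2*c*t*arctanh t) * (r - t).
Proof.
  intros Hc Ht Hr.
  destruct (Rtotal_order t r) as [Hlt|[Heq|Hgt]].
  - destruct (MVT_cor2 (ff c) (fun x => 1 + c - 2*c*x*arctanh x) t r Hlt) as [s [Es Hs]].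
    { intros x Hx. apply is_derive_Reals, deriv_ff. lra. }
    rewrite Es. pose proof (prod_mono t s). apply Rmult_le_compat_r; nra.
  - subst. lra.
  - destruct (MVT_cor2 (ff c) (fun x => 1 + c - 2*c*x*arctanh x) r t Hgt) as [s [Es Hs]].
    { intros x Hx. apply is_derive_Reals, deriv_ff. lra. }
    assert (P : s * arctanh s <= t * arctanh t) by (apply prod_mono; lra).
    assert (0 <= (2*c*(t*arctanh t) - 2*c*(s*arctanh s)) * (t - r)) by (apply Rmult_le_pos; nra).
    nra.
Qed.

Theorem lemma2p5 (c x1 : R) :
  1 < c -> 0 < x1 < 1 ->
  x1 * arctanh x1 < (1 + c) / (2 * c) ->
  exists p, is_Phi c p /\ p < H x1 c.
Proof.
  intros Hc Hx Hh.
  set (K := 1 + c - 2*c*x1*arctanh x1).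
  assert (HK : 0 < K).
  { unfold K. apply (Rmult_lt_compat_l (2*c)) in Hh; [|lra].
    replace (2 * c * ((1 + c) / (2 * c))) with (1 + c) in Hh by (field; lra). lra. }
  set (B := ff c x1 + K * (1 - x1)).
  assert (Hub : is_upper_bound (Phi_set c) B).
  { intros y [r [Hr ->]]. pose proof (tangent c x1 r Hc Hx Hr) as T.
    fold K in T. assert (K * (r - x1) <= K * (1 - x1)) by (apply Rmult_le_compat_l; lra).
    unfold B. unfold ff at 1 in T. lra. }
  destruct (completeness (Phi_set c)) as [p Hp].
  { exists B. exact Hub. }
  { exists (ff c (/2)). exists (/2). split; [lra|reflexivity]. }
  exists p. split; [exact Hp|].
  assert (HpB : p <= B) by (apply Hp; exact Hub).
  assert (HB : H x1 c - ff c x1 = (1 - x1^2) / (2*x1) * K).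
  { unfold H, ff, K. field. lra. }
  assert (HBH : B < H x1 c).
  { unfold B. assert (K * (1 - x1) < (1 - x1 ^ 2) / (2 * x1) * K); [|lra].
    replace ((1 - x1 ^ 2) / (2 * x1) * K) with (K * (1 - x1) * ((1 + x1) / (2 * x1))) by (field; lra).
    rewrite <- (Rmult_1_r (K * (1 - x1))) at 1.
    apply Rmult_lt_compat_l; [nra|].
    apply (Rmult_lt_reg_r (2*x1)); [lra|]. unfold Rdiv. rewrite Rmult_assoc, Rinv_l; lra. }
  lra.
Qed.
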